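(* Let $X=\begin{pmatrix}0&u\sqrt\epsilon\\ v\sqrt\epsilon&0\end{pmatrix}$ with $u,v\in F$, $\nu(u)=0$ and $\nu(v)>0$. Let $s>0$ and $k\in\mathcal{K}$. Then $k^{-1}Xk\in X+\mathfrak{k}_s$ if and only if $k=cg$ for some $c\in T(X)$ and $g\in\mathcal{K}_s$.
   Context: $F$ non-archimedean local field, $p\neq2$, uniformiser $\varpi$, valuation $\nu$; $E=F[\sqrt\epsilon]$ unramified quadratic ($\epsilon\in\mathcal{O}_F^\times$ non-square). $G=\mathbb{U}(1,1)(F)$ (hermitian form $\mathrm{w}=\begin{pmatrix}0&1\\1&0\end{pmatrix}$), $\mathcal{K}=G\cap M_2(\mathcal{O}_E)$ with filtration $\mathcal{K}_n=\begin{pmatrix}1+\mathfrak{p}_E^n&\mathfrak{p}_E^n\\ \mathfrak{p}_E^n&1+\mathfrak{p}_E^n\end{pmatrix}\cap G$ ($\mathcal{K}_s:=\mathcal{K}_{\lceil s\rceil}$) and Lie algebra filtration $\mathfrak{k}_r=\begin{pmatrix}\mathfrak{p}_E^{\lceil r\rceil}&\sqrt\epsilon\mathfrak{p}_F^{\lceil r\rceil}\\ \sqrt\epsilon\mathfrak{p}_F^{\lceil r\rceil}&\mathfrak{p}_E^{\lceil r\rceil}\end{pmatrix}\cap\mathfrak{k}$. $T(X)$ is the centralizer of $X$ in $\mathcal{K}$, namely $\left\{\begin{pmatrix}a&b\\ bu^{-1}v&a\end{pmatrix}: a,b\in\mathcal{O}_E,\ a\overline{a}+b\overline{b}u^{-1}v=1,\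 \overline{a}b\in\sqrt\epsilon\mathcal{O}_F\right\}$. *)

(* Defs.v *)
From HB Require Import structures.
From mathcomp Require Import all_boot all_order all_algebra.
From mathcomp Require Import reals.
Set Implicit Arguments. Unset Strict Implicit. Unset Printing Implicit Defensive.
Import Order.TTheory GRing.Theory Num.Theory.
Local Open Scope ring_scope.

Section Defs.
Variable F : fieldType.
Variable nu : F -> int.  (* normalized valuation; its value at 0 is irrelevant *)

(* x \in p_F^n  (with the convention nu 0 = +oo) *)
Definition in_pF (n : int) (x : F) : Prop := x = 0 \/ n <= nu x.

Definition is_discrete_valuation : Prop :=
  [/\ forall x y, x != 0 -> y != 0 -> nu (x * y) = nu x + nu y,
      forall x y, x != 0 -> y != 0 -> x + y != 0 ->
        Order.min (nu x) (nu y) <= nu (x + y)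
    & forall n : int, exists x, x != 0 /\ nu x = n].

Definition is_complete : Prop :=
  forall a : nat -> F,
    (forall n : int, exists N, forall m k, (N <= m)%N -> (N <= k)%N ->
        in_pF n (a m - a k)) ->
    exists l, forall n : int, exists N, forall m, (N <= m)%N -> in_pF n (a m - l).

Definition finite_residue_field : Prop :=
  exists r : seq F, (forall y, y \in r -> in_pF 0 y) /\
    forall x, in_pF 0 x -> exists2 y, y \in r & in_pF 1 (x - y).

Definition nonarch_local_field_odd : Prop :=
  [/\ is_discrete_valuation, is_complete, finite_residue_field
    & (2%:R : F) != 0 /\ nu 2%:R = 0].

(* E = F[sqrt eps], unramified quadratic: iota : F -> E, se = sqrt eps,
   sigma = the nontrivial Galois automorphism (conjugation) *)
Definition unramified_quadratic (eps : F) (E : fieldType)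
  (iota : {rmorphism F -> E}) (se : E) (sigma : {rmorphism E -> E}) : Prop :=
  [/\ eps != 0 /\ nu eps = 0,
      ~ (exists a : F, a ^+ 2 = eps),
      se ^+ 2 = iota eps,
      forall z : E, exists a b : F, z = iota a + iota b * se
    & (forall a, sigma (iota a) = iota a) /\ sigma se = - se].

Variables (E : fieldType) (iota : {rmorphism F -> E}) (se : E)
  (sigma : {rmorphism E -> E}).

Definition in_pE (n : int) (z : E) : Prop :=
  exists a b : F, z = iota a + iota b * se /\ in_pF n a /\ in_pF n b.

Definition in_se_pF (n : int) (z : E) : Prop :=
  exists b : F, z = iota b * se /\ in_pF n b.

Definition mx2 (a b c d : E) : 'M[E]_2 :=
  \matrix_(i < 2, j < 2)
    if i == ord0 then (if j == ord0 then a else b) else (if j == ord0 then c else d).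

Definition w : 'M[E]_2 := mx2 0 1 1 0.

Definition adj (g : 'M[E]_2) : 'M[E]_2 := (map_mx sigma g)^T.

Definition inG (g : 'M[E]_2) : Prop := adj g *m w *m g = w.

Definition inK (g : 'M[E]_2) : Prop := inG g /\ forall i j, in_pE 0 (g i j).

Definition inKn (n : int) (g : 'M[E]_2) : Prop :=
  inG g /\ forall i j, in_pE n ((g - 1%:M) i j).

Definition in_liek (Y : 'M[E]_2) : Prop :=
  adj Y *m w + w *m Y = 0 /\ forall i j, in_pE 0 (Y i j).

(* frak k_n (for n = ceil r) *)
Definition in_liekn (n : int) (Y : 'M[E]_2) : Prop :=
  [/\ in_liek Y,
      in_pE n (Y ord0 ord0), in_pE n (Y ord_max ord_max),
      in_se_pF n (Y ord0 ord_max) & in_se_pF n (Y ord_max ord0)].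

Definition inT (X c : 'M[E]_2) : Prop := inK c /\ c *m X = X *m c.

End Defs.

(* Main.v *)
Require Import Defs.
From HB Require Import structures.
From mathcomp Require Import all_boot all_order all_algebra.
From mathcomp Require Import reals.
From mathcomp Require Import ring lra zify.
Import Order.TTheory GRing.Theory Num.Theory.
Local Open Scope ring_scope.

Section S.
Variables (F : fieldType) (nu : F -> int) (eps : F) (E : fieldType)
  (iota : {rmorphism F -> E}) (se : E) (sigma : {rmorphism E -> E}).
Hypothesis HF : nonarch_local_field_odd nu.
Hypothesis HE : unramified_quadratic nu eps iota se sigma.

Local Notation pF := (in_pF nu).

Lemma nuM {x y} : x != 0 -> y != 0 -> nu (x * y) = nu x + nu y.
Proof. by case: HF => [[h1 h2 _] _ _ _]; first [apply: h1|apply: h2]. Qed.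
Lemma nuD {x y} : x != 0 -> y != 0 -> x + y != 0 -> Order.min (nu x) (nu y) <= nu (x + y).
Proof. by case: HF => [[h1 h2 _] _ _ _]; first [apply: h1|apply: h2]. Qed.

Lemma nu1 : nu 1 = 0.
Proof. have h1 : (1:F) != 0 := oner_neq0 _. have := nuM h1 h1. rewrite mulr1. lia. Qed.

Lemma nuN1 : nu (-1) = 0.
Proof.
have h : (-1 : F) != 0 by rewrite oppr_eq0 oner_neq0.
have := nuM h h. rewrite mulrNN mulr1 nu1. lia.
Qed.

Lemma nuN x : nu (- x) = nu x.
Proof.
have [->|x0] := eqVneq x 0; first by rewrite oppr0.
have h : (-1 : F) != 0 by rewrite oppr_eq0 oner_neq0.
by rewrite -mulN1r nuM // nuN1 add0r.
Qed.

Lemma nuV x : x != 0 -> nu x^-1 = - nu x.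
Proof.
move=> x0. have := nuM x0 (invr_neq0 x0). rewrite mulfV // nu1. lia.
Qed.

Lemma pF0 n : pF n 0. Proof. by left. Qed.

Lemma pFD n x y : pF n x -> pF n y -> pF n (x + y).
Proof.
case=> [->|hx]; first by rewrite add0r.
case=> [->|hy]; first by rewrite addr0 /in_pF; right.
have [->|x0] := eqVneq x 0; first by rewrite add0r; right.
have [->|y0] := eqVneq y 0; first by rewrite addr0; right.
have [->|s0] := eqVneq (x + y) 0; first by left.
right; apply: le_trans (nuD x0 y0 s0).
by rewrite le_min hx hy.
Qed.

Lemma pFN n x : pF n x -> pF n (- x).
Proof. by case=> [->|h]; [rewrite oppr0; left | right; rewrite nuN]. Qed.

Lemma pFB n x y : pF n x -> pF n y -> pF n (x - y).
Proof. by move=> hx hy; apply: pFD => //; apply: pFN. Qed.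

Lemma pFM m n x y : pF m x -> pF n y -> pF (m + n) (x * y).
Proof.
case=> [->|hx]; first by rewrite mul0r; left.
case=> [->|hy]; first by rewrite mulr0; left.
have [->|x0] := eqVneq x 0; first by rewrite mul0r; left.
have [->|y0] := eqVneq y 0; first by rewrite mulr0; left.
by right; rewrite nuM // lerD.
Qed.

Lemma pF_mono m n x : m <= n -> pF n x -> pF m x.
Proof. by move=> mn [->|h]; [left | right; apply: le_trans h]. Qed.

Lemma pF1 : pF 0 1. Proof. by right; rewrite nu1. Qed.

Lemma pF_zero x : (forall j, pF j x) -> x = 0.
Proof.
move=> h; have [] := h (nu x + 1) => // hle.
have : nu x + 1 <= nu x := hle. lia.
Qed.

Lemma pF_unit x : pF 1 (x - 1) -> x != 0 /\ nu x = 0.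
Proof.
move=> h.
have x0 : x != 0.
  apply/negP => /eqP x0; move: h; rewrite x0 sub0r.
  by case=> [/eqP|]; [rewrite oppr_eq0 oner_eq0 | rewrite nuN nu1].
split=> //.
have [e1|e1] := eqVneq (x - 1) 0.
  by move/eqP: e1; rewrite subr_eq0 => /eqP ->; rewrite nu1.
case: h => [/eqP|h]; first by rewrite (negPf e1).
have H1 : (x - (x - 1)) = 1 by ring.
have e1N : - (x - 1) != 0 by rewrite oppr_eq0.
have := nuD x0 e1N; rewrite H1 oner_neq0 nuN nu1 => /(_ isT).
have h1 : (1:F) != 0 := oner_neq0 _. have := nuD h1 e1; rewrite addrC subrK nu1 => /(_ x0).
rewrite /Order.min; case: ifP; case: ifP => ? ? ? ?; lia.
Qed.


Local Notation pE := (in_pE nu iota se).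

Lemma se2 : se ^+ 2 = iota eps. Proof. by case: HE. Qed.
Lemma eps_unit : eps != 0 /\ nu eps = 0. Proof. by case: HE. Qed.
Lemma eps_nsq : ~ (exists a : F, a ^+ 2 = eps). Proof. by case: HE. Qed.
Lemma coords z : exists a b : F, z = iota a + iota b * se. Proof. by case: HE. Qed.
Lemma sig_iota a : sigma (iota a) = iota a. Proof. by case: HE => _ _ _ _ []. Qed.
Lemma sig_se : sigma se = - se. Proof. by case: HE => _ _ _ _ []. Qed.

Lemma iota_inj : injective iota. Proof. exact: fmorph_inj. Qed.

Lemma coord_uniq a b c d :
  iota a + iota b * se = iota c + iota d * se -> a = c /\ b = d.
Proof.
move=> h.
have [bd|bd] := eqVneq b d.
  by subst; split => //; apply: iota_inj; move/addIr: h.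
exfalso; apply: eps_nsq; exists ((c - a) / (b - d)).
apply: iota_inj; rewrite -se2.
have bd' : iota (b - d) != 0 by rewrite fmorph_eq0 subr_eq0.
have hs : se = iota ((c - a) / (b - d)).
  rewrite fmorph_div; apply: (mulIf bd'); rewrite divfK //.
  rewrite !rmorphB /=; apply/eqP; rewrite -subr_eq0; apply/eqP.
  have : iota a + iota b * se - (iota c + iota d * se) = 0 by rewrite h subrr.
  move=> h2; rewrite -h2; ring.
by rewrite hs rmorphXn.
Qed.

Lemma sig_coord a b : sigma (iota a + iota b * se) = iota a - iota b * se.
Proof. by rewrite rmorphD rmorphM /= !sig_iota sig_se mulrN. Qed.

Lemma sigK z : sigma (sigma z) = z.
Proof.
have [a [b ->]] := coords z.
by rewrite sig_coord rmorphB rmorphM /= !sig_iota sig_se mulrN opprK.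
Qed.

Lemma pE_coord n a b : pE n (iota a + iota b * se) <-> pF n a /\ pF n b.
Proof.
split; last by move=> [ha hb]; exists a, b.
by move=> [a' [b' [/coord_uniq [-> ->] [ha hb]]]].
Qed.

Lemma mul_coord a b c d : (iota a + iota b * se) * (iota c + iota d * se) =
  iota (a * c + eps * (b * d)) + iota (a * d + b * c) * se.
Proof. rewrite !rmorphD !rmorphM /= -se2; ring. Qed.

Lemma pE0 n : pE n 0.
Proof. exists 0, 0; rewrite rmorph0 mul0r addr0; split => //; split; exact: pF0. Qed.

Lemma pED n x y : pE n x -> pE n y -> pE n (x + y).
Proof.
move=> [a [b [-> [ha hb]]]] [c [d [-> [hc hd]]]].
exists (a + c), (b + d); split; last by split; apply: pFD.
rewrite !rmorphD /=; ring.
Qed.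

Lemma pEN n x : pE n x -> pE n (- x).
Proof.
move=> [a [b [-> [ha hb]]]]; exists (- a), (- b); split; last by split; apply: pFN.
rewrite !rmorphN /=; ring.
Qed.

Lemma pEB n x y : pE n x -> pE n y -> pE n (x - y).
Proof. by move=> hx hy; apply: pED => //; apply: pEN. Qed.

Lemma pF_eps : pF 0 eps. Proof. by right; case: eps_unit => _ ->. Qed.

Lemma pEM m n x y : pE m x -> pE n y -> pE (m + n) (x * y).
Proof.
move=> [a [b [-> [ha hb]]]] [c [d [-> [hc hd]]]].
rewrite mul_coord; apply/pE_coord; split.
  apply: pFD; first exact: pFM.
  by rewrite -(add0r (m + n)); apply: pFM; [exact: pF_eps | exact: pFM].
by apply: pFD; apply: pFM.
Qed.

Lemma pE_mono m n x : m <= n -> pE n x -> pE m x.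
Proof.
move=> mn [a [b [-> [ha hb]]]]; apply/pE_coord; split; exact: pF_mono ha || exact: pF_mono hb.
Qed.

Lemma pE_iota n a : pF n a -> pE n (iota a).
Proof. by move=> h; exists a, 0; rewrite rmorph0 mul0r addr0; split => //; split => //; apply: pF0. Qed.

Lemma pE_se : pE 0 se.
Proof. by exists 0, 1; rewrite rmorph0 rmorph1 add0r mul1r; split => //; split; [apply: pF0|apply: pF1]. Qed.

Lemma pE1 : pE 0 1.
Proof. by rewrite -(rmorph1 iota); apply: pE_iota; apply: pF1. Qed.

Lemma pE_sig n z : pE n z -> pE n (sigma z).
Proof.
move=> [a [b [-> [ha hb]]]]; rewrite sig_coord -mulNr -rmorphN.
by apply/pE_coord; split => //; apply: pFN.
Qed.

Lemma pEM0 n x y : pE 0 x -> pE n y -> pE n (x * y).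
Proof. by move=> hx hy; rewrite -(add0r n); apply: pEM. Qed.


Lemma ord2P (i : 'I_2) : i = ord0 \/ i = ord_max.
Proof. case: i => [[|[|m]] h]; [left|right|]; try exact: val_inj. by []. Qed.

Local Notation mx2 := (@mx2 E).

Lemma mx2E00 a b c d : mx2 a b c d ord0 ord0 = a. Proof. by rewrite mxE. Qed.
Lemma mx2E01 a b c d : mx2 a b c d ord0 ord_max = b. Proof. by rewrite mxE. Qed.
Lemma mx2E10 a b c d : mx2 a b c d ord_max ord0 = c. Proof. by rewrite mxE. Qed.
Lemma mx2E11 a b c d : mx2 a b c d ord_max ord_max = d. Proof. by rewrite mxE. Qed.
Definition mx2E := (mx2E00, mx2E01, mx2E10, mx2E11).

Lemma mx2_eta (M : 'M[E]_2) :
  M = mx2 (M ord0 ord0) (M ord0 ord_max) (M ord_max ord0) (M ord_max ord_max).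
Proof. by apply/matrixP => i j; case: (ord2P i) => ->; case: (ord2P j) => ->; rewrite mx2E. Qed.

Lemma mx2_mul a b c d a' b' c' d' :
  mx2 a b c d *m mx2 a' b' c' d' =
  mx2 (a * a' + b * c') (a * b' + b * d') (c * a' + d * c') (c * b' + d * d').
Proof.
apply/matrixP => i j; rewrite !mxE big_ord_recl big_ord1 !mxE.
by case: (ord2P i) => ->; case: (ord2P j) => ->.
Qed.

Lemma mx2_add a b c d a' b' c' d' :
  mx2 a b c d + mx2 a' b' c' d' = mx2 (a + a') (b + b') (c + c') (d + d').
Proof.
apply/matrixP => i j; rewrite !mxE.
by case: (ord2P i) => ->; case: (ord2P j) => ->.
Qed.

Lemma mx2_opp a b c d : - mx2 a b c d = mx2 (- a) (- b) (- c) (- d).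
Proof.
apply/matrixP => i j; rewrite !mxE.
by case: (ord2P i) => ->; case: (ord2P j) => ->.
Qed.

Lemma mx2_sub a b c d a' b' c' d' :
  mx2 a b c d - mx2 a' b' c' d' = mx2 (a - a') (b - b') (c - c') (d - d').
Proof. by rewrite mx2_opp mx2_add. Qed.

Lemma mx2_1 : (1%:M : 'M[E]_2) = mx2 1 0 0 1.
Proof.
apply/matrixP => i j; rewrite !mxE.
by case: (ord2P i) => ->; case: (ord2P j) => ->.
Qed.

Lemma mx2_0 : (0 : 'M[E]_2) = mx2 0 0 0 0.
Proof.
apply/matrixP => i j; rewrite !mxE.
by case: (ord2P i) => ->; case: (ord2P j) => ->.
Qed.

Lemma mx2_inj a b c d a' b' c' d' :
  mx2 a b c d = mx2 a' b' c' d' -> [/\ a = a', b = b', c = c' & d = d'].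
Proof.
move=> h; split.
- by have := congr1 (fun M : 'M_2 => M ord0 ord0) h; rewrite /= !mx2E.
- by have := congr1 (fun M : 'M_2 => M ord0 ord_max) h; rewrite /= !mx2E.
- by have := congr1 (fun M : 'M_2 => M ord_max ord0) h; rewrite /= !mx2E.
- by have := congr1 (fun M : 'M_2 => M ord_max ord_max) h; rewrite /= !mx2E.
Qed.

Local Notation adj := (adj sigma).
Local Notation w := (w E).

Lemma adj_mx2 a b c d : adj (mx2 a b c d) = mx2 (sigma a) (sigma c) (sigma b) (sigma d).
Proof.
apply/matrixP => i j; rewrite !mxE.
by case: (ord2P i) => ->; case: (ord2P j) => ->.
Qed.

Lemma adjM (A B : 'M[E]_2) : adj (A *m B) = adj B *m adj A.
Proof. by rewrite /Defs.adj map_mxM trmx_mul. Qed.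
Lemma adjD (A B : 'M[E]_2) : adj (A + B) = adj A + adj B.
Proof. by rewrite /Defs.adj map_mxD linearD. Qed.
Lemma adjN (A : 'M[E]_2) : adj (- A) = - adj A.
Proof. by rewrite /Defs.adj map_mxN linearN. Qed.
Lemma adjB (A B : 'M[E]_2) : adj (A - B) = adj A - adj B.
Proof. by rewrite adjD adjN. Qed.
Lemma adjK (A : 'M[E]_2) : adj (adj A) = A.
Proof. by apply/matrixP => i j; rewrite !mxE sigK. Qed.
Lemma adjw : adj w = w.
Proof. by rewrite /Defs.w adj_mx2 rmorph0 rmorph1. Qed.
Lemma ww : w *m w = 1%:M.
Proof. by rewrite /Defs.w mx2_mul mx2_1; congr mx2; ring. Qed.

Definition mxin n (M : 'M[E]_2) := forall i j, pE n (M i j).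

Lemma mxin_mx2 n a b c d : pE n a -> pE n b -> pE n c -> pE n d -> mxin n (mx2 a b c d).
Proof. by move=> ha hb hc hd i j; case: (ord2P i) => ->; case: (ord2P j) => ->; rewrite mx2E. Qed.

Lemma mxin_mul m n A B : mxin m A -> mxin n B -> mxin (m + n) (A *m B).
Proof.
move=> hA hB i j; rewrite mxE; apply: big_ind; first exact: pE0; first exact: pED.
by move=> k _; apply: pEM.
Qed.

Lemma mxin_mul0 n A B : mxin 0 A -> mxin n B -> mxin n (A *m B).
Proof. by move=> hA hB; rewrite -(add0r n); apply: mxin_mul. Qed.
Lemma mxin_mul0r n A B : mxin n A -> mxin 0 B -> mxin n (A *m B).
Proof. by move=> hA hB; rewrite -(addr0 n); apply: mxin_mul. Qed.

Lemma mxinD n A B : mxin n A -> mxin n B -> mxin n (A + B).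
Proof. by move=> hA hB i j; rewrite mxE; apply: pED. Qed.
Lemma mxinB n A B : mxin n A -> mxin n B -> mxin n (A - B).
Proof. by move=> hA hB i j; rewrite !mxE; apply: pEB. Qed.
Lemma mxin_adj n A : mxin n A -> mxin n (adj A).
Proof. by move=> hA i j; rewrite !mxE; apply: pE_sig. Qed.
Lemma mxin_w : mxin 0 w.
Proof. by apply: mxin_mx2; (exact: pE0 || exact: pE1). Qed.
Lemma mxin_1 : mxin 0 1%:M.
Proof. by rewrite mx2_1; apply: mxin_mx2; (exact: pE0 || exact: pE1). Qed.
Lemma mxin_mono m n A : m <= n -> mxin n A -> mxin m A.
Proof. by move=> mn h i j; apply: pE_mono (h i j). Qed.


Local Notation inG := (inG sigma).
Definition ginv (A : 'M[E]_2) := w *m adj A *m w.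

Lemma ginv_l A : inG A -> ginv A *m A = 1%:M.
Proof. by move=> h; rewrite /ginv -!mulmxA (mulmxA (adj A)) h ww. Qed.

Lemma ginv_r A : inG A -> A *m ginv A = 1%:M.
Proof. by move=> h; apply: mulmx1C; apply: ginv_l. Qed.

Lemma invmx_left (A B : 'M[E]_2) : B *m A = 1%:M -> invmx A = B.
Proof.
move=> h; have [_ uA] := mulmx1_unit h.
by rewrite -[invmx A]mul1mx -h -mulmxA mulmxV // mulmx1.
Qed.

Lemma invmxG A : inG A -> invmx A = ginv A.
Proof. by move=> h; apply: invmx_left; apply: ginv_l. Qed.

Lemma inG_mul A B : inG A -> inG B -> inG (A *m B).
Proof.
move=> hA hB; rewrite /Defs.inG adjM -!mulmxA (mulmxA (adj A)) (mulmxA (adj A *m w)) hA.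
by rewrite mulmxA.
Qed.

Lemma inG_ginv A : inG A -> inG (ginv A).
Proof.
move=> hA; rewrite /Defs.inG /ginv !adjM adjK adjw.
have h1 : A *m w *m adj A = w.
  have := ginv_r A hA; rewrite /ginv => h.
  have := congr1 (fun M => M *m w) h; rewrite mul1mx -!mulmxA ww mulmx1.
  by rewrite !mulmxA.
rewrite -!mulmxA (mulmxA w w) ww mul1mx.
by rewrite (mulmxA A) (mulmxA (A *m w)) h1 (mulmxA w w) ww mul1mx.
Qed.


Lemma pF_unitV x : pF 1 (x - 1) -> pF 0 x^-1.
Proof. by move=> /pF_unit [x0 nx]; right; rewrite nuV // nx. Qed.

Lemma pF_int x : pF 1 (x - 1) -> pF 0 x.
Proof. by move=> /pF_unit [x0 nx]; right; rewrite nx. Qed.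

Lemma pF_of1 n x : 0 <= n -> pF n (x - 1) -> pF 0 x.
Proof.
move=> n0 h; have -> : x = (x - 1) + 1 by ring.
by apply: pFD; [apply: pF_mono h | apply: pF1].
Qed.

Lemma nu2 : (2%:R : F) != 0 /\ nu 2%:R = 0. Proof. by case: HF. Qed.

Lemma pF_half : pF 0 (2%:R : F)^-1.
Proof. by case: nu2 => h0 h; right; rewrite nuV // h. Qed.

Lemma pFM0 n x y : pF 0 x -> pF n y -> pF n (x * y).
Proof. by move=> hx hy; rewrite -(add0r n); apply: pFM. Qed.

Lemma hensel (n : int) (m : F) : 1 <= n -> pF n (m - 1) ->
  exists l, l ^+ 2 = m /\ pF n (l - 1).
Proof.
move=> n1 hm.
pose h := (2%:R : F)^-1.
pose f := fun x : F => x - (x ^+ 2 - m) * h.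
pose x := fun k : nat => iter k f 1.
have xS k : x k.+1 = f (x k) by [].
have inv : forall k : nat, pF n (x k - 1) /\ pF (n + k%:Z) (x k ^+ 2 - m).
  elim=> [|k [IH1 IH2]].
    rewrite /x /= subrr; split; first exact: pF0.
    rewrite expr1n addr0 -opprB; exact: pFN.
  set e := x k ^+ 2 - m in IH2.
  have he : pF (n + k%:Z) (e * h) by rewrite mulrC; apply: pFM0 => //; apply: pF_half.
  rewrite xS /f; split.
    have -> : x k - (x k ^+ 2 - m) * h - 1 = (x k - 1) - e * h by rewrite /e; ring.
    by apply: pFB => //; apply: pF_mono he; lia.
  have -> : (x k - (x k ^+ 2 - m) * h) ^+ 2 - m = e * ((1 - x k) + e * (h * h)).
    rewrite /e /h; field; by case: nu2.
  have -> : n + k.+1%:Z = (n + k%:Z) + 1 by lia.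
  apply: pFM => //; apply: pFD.
    have -> : 1 - x k = - (x k - 1) by ring.
    by apply: pFN; apply: pF_mono IH1; lia.
  rewrite mulrA; apply: pF_mono (_ : pF (n + k%:Z + 0) _); first lia.
  by apply: pFM => //; apply: pF_half.
have step : forall k : nat, pF (n + k%:Z) (x k.+1 - x k).
  move=> k; rewrite xS /f.
  have -> : x k - (x k ^+ 2 - m) * h - x k = - ((x k ^+ 2 - m) * h) by ring.
  apply: pFN; rewrite mulrC; apply: pFM0; first exact: pF_half.
  by case: (inv k).
have tele : forall k i : nat, pF (n + k%:Z) (x (k + i)%N - x k).
  move=> k; elim=> [|i IH]; first by rewrite addn0 subrr; apply: pF0.
  have -> : x (k + i.+1)%N - x k = (x (k + i).+1 - x (k + i)%N) + (x (k + i)%N - x k).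
    by rewrite addnS; ring.
  apply: pFD => //; apply: pF_mono (step _); lia.
have tele' : forall k j : nat, (k <= j)%N -> pF (n + k%:Z) (x j - x k).
  by move=> k j kj; rewrite -(subnKC kj); apply: tele.
have [l hl] : exists l, forall j : int, exists N, forall m0, (N <= m0)%N -> pF j (x m0 - l).
  case: HF => _ hc _ _; apply: hc => j.
  exists `|j|%N => m1 m2 h1 h2.
  have -> : x m1 - x m2 = (x m1 - x `|j|%N) - (x m2 - x `|j|%N) by ring.
  apply: pF_mono (_ : pF (n + `|j|%N%:Z) _); first lia.
  by apply: pFB; apply: tele'.
have hl1 : pF n (l - 1).
  have [N hN] := hl n.
  have -> : l - 1 = (x N - 1) - (x N - l) by ring.
  by apply: pFB; [case: (inv N) | apply: hN].
exists l; split => //.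
apply/eqP; rewrite -subr_eq0; apply/eqP; apply: pF_zero => j.
have [N hN] := hl j.
pose M := maxn N `|j|%N.
have hM1 := hN M (leq_maxl _ _).
have [hM2 hM3] := inv M.
have -> : l ^+ 2 - m = (x M ^+ 2 - m) - (x M - l) * (x M + l) by ring.
apply: pFB.
  apply: pF_mono hM3; have : (`|j|%N <= M)%N := leq_maxr _ _. lia.
rewrite -(addr0 j); apply: pFM => //; apply: pFD; apply: pF_of1 (_ : 0 <= n) _ => //; lia.
Qed.


Lemma pE_iotaE n x : pE n (iota x) <-> pF n x.
Proof.
have -> : iota x = iota x + iota 0 * se by rewrite rmorph0 mul0r addr0.
by rewrite pE_coord; split => [[]|h] //; split => //; apply: pF0.
Qed.

Lemma pEMr0 n x y : pE n x -> pE 0 y -> pE n (x * y).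
Proof. by move=> hx hy; rewrite -(addr0 n); apply: pEM. Qed.

Lemma normE x y : sigma (iota x + iota y * se) * (iota x + iota y * se) =
  iota (x ^+ 2 - eps * y ^+ 2).
Proof. rewrite sig_coord rmorphB !rmorphM /= -se2; ring. Qed.

Lemma core (n : int) (r0 : F) a b : 1 <= n -> pF 1 r0 -> pE 0 a -> pE 0 b ->
  pE n (sigma a * a + iota r0 * (sigma b * b) - 1) ->
  pE n (sigma a * b + sigma b * a) ->
  exists A B, [/\ pE 0 A, pE 0 B, sigma A * A + iota r0 * (sigma B * B) = 1,
     sigma A * B + sigma B * A = 0 & pE n (A - a) /\ pE n (B - b)].
Proof.
move=> n1 hr0 ha hb H1 H2.
have n0 : 0 <= n by lia.
have [a1 [a2 ea]] := coords a.
have [b1 [b2 eb]] := coords b.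
have hq : sigma a * a = iota (a1 ^+ 2 - eps * a2 ^+ 2) by rewrite ea normE.
have hqb : sigma b * b = iota (b1 ^+ 2 - eps * b2 ^+ 2) by rewrite eb normE.
set q0 := a1 ^+ 2 - eps * a2 ^+ 2 in hq.
set qb := b1 ^+ 2 - eps * b2 ^+ 2 in hqb.
have hqb0 : pF 0 qb.
  move: hb; rewrite eb pE_coord => -[hb1 hb2].
  rewrite /qb expr2 expr2; apply: pFB; first by apply: pFM0.
  by apply: pFM0; [exact: pF_eps | apply: pFM0].
have hq00 : pF 0 q0.
  move: ha; rewrite ea pE_coord => -[hb1 hb2].
  rewrite /q0 expr2 expr2; apply: pFB; first by apply: pFM0.
  by apply: pFM0; [exact: pF_eps | apply: pFM0].
have H1' : pF n (q0 + r0 * qb - 1).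
  by apply/(pE_iotaE n); rewrite rmorphB rmorphD rmorphM rmorph1 /= -hq -hqb.
have hr00 : pF 0 r0 by apply: pF_mono hr0.
have hq01 : pF 1 (q0 - 1).
  have -> : q0 - 1 = (q0 + r0 * qb - 1) - r0 * qb by ring.
  apply: pFB; first by apply: pF_mono H1'.
  by rewrite -(addr0 1); apply: pFM.
have [q0n0 _] := pF_unit _ hq01.
have hqi : pF 0 q0^-1 by apply: pF_unitV.
pose ai := sigma a * iota q0^-1.
have aai : a * ai = 1.
  by rewrite /ai mulrA [a * _]mulrC hq -rmorphM mulfV // rmorph1.
pose wv := b * ai.
have hwv : pE 0 wv.
  by rewrite /wv /ai; apply: pEM0 => //; apply: pEM0; [apply: pE_sig | apply/pE_iotaE].
have [x1 [y1 ewv]] := coords wv.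
have [hx10 hy10] : pF 0 x1 /\ pF 0 y1 by apply/(pE_coord 0); rewrite -ewv.
have swv : sigma wv = sigma b * a * iota q0^-1.
  by rewrite /wv /ai !rmorphM /= sigK sig_iota; ring.
have hx1 : pF n x1.
  have e2 : iota (x1 + x1) = (sigma a * b + sigma b * a) * iota q0^-1.
    have -> : (sigma a * b + sigma b * a) * iota q0^-1 = wv + sigma wv.
      by rewrite swv /wv /ai; ring.
    by rewrite ewv sig_coord rmorphD; ring.
  have : pF n (x1 + x1).
    by apply/(pE_iotaE n); rewrite e2; apply: pEMr0 => //; apply/pE_iotaE.
  move=> h2; have -> : x1 = (2%:R)^-1 * (x1 + x1).
    by field; case: nu2.
  by apply: pFM0 => //; apply: pF_half.
have eb2 : b = a * wv by rewrite /wv mulrA [a * b]mulrC -mulrA aai mulr1.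
have eqb : qb = q0 * (x1 ^+ 2 - eps * y1 ^+ 2).
  apply: iota_inj; rewrite -hqb eb2 rmorphM /= mulrACA hq ewv normE.
  by rewrite rmorphM.
pose N0 := q0 * (1 - r0 * (eps * y1 ^+ 2)).
have hN0 : pF n (N0 - 1).
  have -> : N0 - 1 = (q0 + r0 * qb - 1) - r0 * q0 * (x1 * x1) by rewrite eqb /N0; ring.
  apply: pFB => //; apply: pFM0; first by apply: pFM0.
  by rewrite -(addr0 n); apply: pFM.
have [l [hl2 hl1]] := hensel n N0 n1 hN0.
have [l0 _] := pF_unit _ (pF_mono _ _ _ n1 hl1).
pose lam := l^-1.
have hlam0 : pF 0 lam by apply: pF_unitV; apply: pF_mono hl1.
have hlam : pF n (lam - 1).
  have -> : lam - 1 = - ((l - 1) * lam) by rewrite /lam; field.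
  by apply: pFN; rewrite -(addr0 n); apply: pFM.
pose rho := iota y1 * se.
have srho : sigma rho = - rho by rewrite /rho rmorphM /= sig_iota sig_se mulrN.
have sA : sigma (iota lam * a) = iota lam * sigma a by rewrite rmorphM sig_iota.
have sB : sigma (iota lam * a * rho) = - (iota lam * sigma a * rho).
  by rewrite rmorphM srho sA mulrN.
exists (iota lam * a), (iota lam * a * rho); split.
- by apply: pEM0 => //; apply/pE_iotaE.
- apply: pEMr0; first by apply: pEM0 => //; apply/pE_iotaE.
  by apply: pEM0; [apply/pE_iotaE | apply: pE_se].
- rewrite sA sB.
  have -> : iota lam * sigma a * (iota lam * a) +
      iota r0 * (- (iota lam * sigma a * rho) * (iota lam * a * rho)) =
      iota lam ^+ 2 * (sigma a * a) * (1 - iota r0 * (rho * rho)) by ring.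
  have -> : rho * rho = iota (eps * y1 ^+ 2) by rewrite /rho rmorphM rmorphXn -se2; ring.
  rewrite hq.
  have K : lam ^+ 2 * q0 * (1 - r0 * (eps * y1 ^+ 2)) = 1.
    by rewrite -mulrA -/N0 -hl2 /lam; field.
  transitivity (iota (lam ^+ 2 * q0 * (1 - r0 * (eps * y1 ^+ 2)))); last by rewrite K; exact: rmorph1.
  rewrite !rmorphM !rmorphB !rmorph1 ?rmorphXn; ring.
- rewrite sA sB; ring.
split.
- have -> : iota lam * a - a = iota (lam - 1) * a by rewrite rmorphB rmorph1; ring.
  by apply: pEMr0 => //; apply/pE_iotaE.
- have -> : iota lam * a * rho - b = iota (lam - 1) * (a * rho) - a * iota x1.
    by rewrite eb2 ewv rmorphB rmorph1 -/rho; ring.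
  apply: pEB.
    apply: pEMr0; first by apply/pE_iotaE.
    by apply: pEM0 => //; apply: pEM0; [apply/pE_iotaE | apply: pE_se].
  by apply: pEM0 => //; apply/pE_iotaE.
Qed.


Lemma inG_mx2 a b c d : inG (mx2 a b c d) <->
  [/\ sigma c * a + sigma a * c = 0, sigma c * b + sigma a * d = 1,
      sigma d * a + sigma b * c = 1 & sigma d * b + sigma b * d = 0].
Proof.
rewrite /Defs.inG adj_mx2 /Defs.w !mx2_mul !mulr0 !mulr1 !addr0 !add0r.
split; first by move/mx2_inj => [-> -> -> ->].
by case=> -> -> -> ->.
Qed.

Lemma liek_eq (Y : 'M[E]_2) : adj Y *m w + w *m Y =
  mx2 (sigma (Y ord_max ord0) + Y ord_max ord0) (sigma (Y ord0 ord0) + Y ord_max ord_max)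
      (sigma (Y ord_max ord_max) + Y ord0 ord0) (sigma (Y ord0 ord_max) + Y ord0 ord_max).
Proof.
have H a b c d : adj (mx2 a b c d) *m w + w *m mx2 a b c d =
    mx2 (sigma c + c) (sigma a + d) (sigma d + a) (sigma b + b).
  rewrite adj_mx2 /Defs.w !mx2_mul mx2_add; congr mx2; ring.
by rewrite [in LHS](mx2_eta Y) H.
Qed.

Lemma skew_se n z : sigma z + z = 0 -> pE n z -> in_se_pF nu iota se n z.
Proof.
move=> hz [a [b [ez [ha hb]]]]; exists b; split => //.
move: hz; rewrite ez sig_coord => h.
have h2 : iota (a + a) = 0 by rewrite rmorphD -h; ring.
have a0 : a = 0.
  have : a + a = 0 by apply: iota_inj; rewrite h2 rmorph0.
  move=> e; have -> : a = (2%:R)^-1 * (a + a) by field; case: nu2.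
  by rewrite e mulr0.
by rewrite a0 rmorph0 add0r.
Qed.

Lemma liekn_of n Y : 0 <= n -> adj Y *m w + w *m Y = 0 -> mxin n Y ->
  in_liekn nu iota se sigma n Y.
Proof.
move=> n0 hY hm.
have := hY; rewrite liek_eq mx2_0 => /mx2_inj [e1 _ _ e4].
split.
- by split => // i j; apply: pE_mono (hm i j).
- exact: hm.
- exact: hm.
- exact: skew_se e4 (hm _ _).
- exact: skew_se e1 (hm _ _).
Qed.

Lemma se_pE n z : in_se_pF nu iota se n z -> pE n z.
Proof.
move=> [b [-> hb]]; have -> : iota b * se = iota 0 + iota b * se by rewrite rmorph0 add0r.
by apply/pE_coord; split => //; apply: pF0.
Qed.

Lemma mxin_of_liekn n Y : in_liekn nu iota se sigma n Y -> mxin n Y.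
Proof.
move=> [_ h00 h11 h01 h10] i j.
by case: (ord2P i) => ->; case: (ord2P j) => -> //; apply: se_pE.
Qed.

Lemma liek_conj h X : inG h -> adj X *m w + w *m X = 0 ->
  let Y := ginv h *m X *m h - X in adj Y *m w + w *m Y = 0.
Proof.
move=> hh hX Y.
have hZ : adj X *m w = - (w *m X) by apply/eqP; rewrite -addr_eq0 hX.
have t1 : adj (ginv h *m X *m h) *m w = adj h *m (adj X *m w) *m h.
  rewrite /ginv !adjM adjK adjw !mulmxA.
  by rewrite -(mulmxA _ w w) ww mulmx1.
have t2 : w *m (ginv h *m X *m h) = adj h *m (w *m X) *m h.
  by rewrite /ginv !mulmxA ww mul1mx.
rewrite /Y adjB mulmxBl mulmxBr t1 t2 hZ mulmxN mulNmx.
by rewrite opprK addrACA addNr subrr addr0.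
Qed.

Lemma ginvM A B : ginv (A *m B) = ginv B *m ginv A.
Proof.
rewrite /ginv adjM !mulmxA -(mulmxA _ w w) ww mulmx1; by [].
Qed.

Lemma mxin_ginv n A : mxin n A -> mxin n (ginv A).
Proof.
move=> h; rewrite /ginv; apply: mxin_mul0r; last exact: mxin_w.
by apply: mxin_mul0; [exact: mxin_w | apply: mxin_adj].
Qed.


Local Notation inK := (inK nu iota se sigma).

Lemma mxin_inK A : inK A -> mxin 0 A. Proof. by case. Qed.

Lemma skewX (U V : E) : sigma U = - U -> sigma V = - V ->
  adj (mx2 0 U V 0) *m w + w *m mx2 0 U V 0 = 0.
Proof.
move=> hU hV; rewrite adj_mx2 hU hV rmorph0 /Defs.w !mx2_mul mx2_add mx2_0.
congr mx2; ring.
Qed.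

Lemma sig_iota_se x : sigma (iota x * se) = - (iota x * se).
Proof. by rewrite rmorphM sig_iota sig_se mulrN. Qed.

Lemma if_dir (n : int) (u v : F) (k c g : 'M[E]_2) :
  1 <= n -> pF 0 u -> pF 0 v -> inK k ->
  inT nu iota se sigma (mx2 0 (iota u * se) (iota v * se) 0) c ->
  inKn nu iota se sigma n g -> k = c *m g ->
  in_liekn nu iota se sigma n
    (invmx k *m mx2 0 (iota u * se) (iota v * se) 0 *m k - mx2 0 (iota u * se) (iota v * se) 0).
Proof.
set X := mx2 0 _ _ 0 => n1 hu hv hk [[hcG hc] hcX] [hgG hg] ek.
have hX0 : mxin 0 X.
  by apply: mxin_mx2; try exact: pE0; apply: pEM0; try exact: pE_se; apply/pE_iotaE.
rewrite invmxG; last by case: hk.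
apply: liekn_of; first lia.
  by apply: liek_conj; [case: hk | apply: skewX; apply: sig_iota_se].
have -> : ginv k *m X *m k - X = ginv g *m (X *m (g - 1%:M) - (g - 1%:M) *m X).
  rewrite ek ginvM.
  have e1 : ginv g *m ginv c *m X *m (c *m g) = ginv g *m X *m g.
    rewrite (mulmxA _ c g) -(mulmxA _ X c) -hcX (mulmxA _ c X).
    by rewrite -(mulmxA (ginv g) (ginv c) c) ginv_l // mulmx1.
  rewrite e1 !mulmxBr mulmxBl !mulmxBr mulmx1 mul1mx.
  rewrite (mulmxA (ginv g) g X) ginv_l // mul1mx (mulmxA (ginv g) X g).
  by rewrite opprB addrA subrK.
have hD : mxin n (g - 1%:M) by [].
have hg0 : mxin 0 g.
  have -> : g = (g - 1%:M) + 1%:M by rewrite subrK.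
  by apply: mxinD; [apply: mxin_mono hD; lia | apply: mxin_1].
apply: mxin_mul0; first exact: mxin_ginv.
by apply: mxinB; [apply: mxin_mul0 | apply: mxin_mul0r].
Qed.


Lemma onlyif_dir (n : int) (u v : F) (k : 'M[E]_2) :
  1 <= n -> u != 0 -> nu u = 0 -> v != 0 -> 0 < nu v -> inK k ->
  in_liekn nu iota se sigma n
    (invmx k *m mx2 0 (iota u * se) (iota v * se) 0 *m k - mx2 0 (iota u * se) (iota v * se) 0) ->
  exists c g : 'M[E]_2,
    [/\ inT nu iota se sigma (mx2 0 (iota u * se) (iota v * se) 0) c,
        inKn nu iota se sigma n g & k = c *m g].
Proof.
set U := iota u * se; set V := iota v * se; set X := mx2 0 U V 0.
move=> n1 u0 nu0 v0 nv hk hY.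
have n0 : 0 <= n by lia.
have [hkG hk0] := hk.
have hm := mxin_of_liekn _ _ hY.
rewrite invmxG // in hm.
have hc : mxin n (X *m k - k *m X).
  have -> : X *m k - k *m X = k *m (ginv k *m X *m k - X).
    by rewrite mulmxBr (mulmxA k (ginv k *m X) k) (mulmxA k (ginv k) X) ginv_r // mul1mx.
  exact: mxin_mul0.
set a := k ord0 ord0 in hc hk0; set b := k ord0 ord_max in hc hk0.
set c := k ord_max ord0 in hc hk0; set d := k ord_max ord_max in hc hk0.
have ek : k = mx2 a b c d by apply: mx2_eta.
have ha : pE 0 a := hk0 _ _.
have hb : pE 0 b := hk0 _ _.
have hcc : pE 0 c := hk0 _ _.
have hd : pE 0 d := hk0 _ _.
move: hc; rewrite ek /X !mx2_mul mx2_sub => hc.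
have h00 := hc ord0 ord0; have h01 := hc ord0 ord_max.
rewrite !mx2E in h00 h01.
pose Ui := iota (u^-1 * eps^-1) * se.
pose r0 := v / u.
pose r := iota r0.
have [e0 nue] := eps_unit.
have hUi : Ui * U = 1.
  rewrite /Ui /U mulrACA -expr2 se2 -!rmorphM.
  have -> : u^-1 * eps^-1 * u * eps = 1 by field; rewrite u0 e0.
  exact: rmorph1.
have hUiV : Ui * V = r.
  rewrite /Ui /V /r mulrACA -expr2 se2 -!rmorphM; congr (iota _).
  by rewrite /r0; field; rewrite u0 e0.
have hUr : U * r = V.
  by rewrite /U /V /r mulrAC -rmorphM /r0; congr (_ * se); congr (iota _); field.
have hUi0 : pE 0 Ui.
  apply: pEMr0; last exact: pE_se.
  apply/pE_iotaE; rewrite -(addr0 0); apply: pFM; right; rewrite nuV //; lia.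
have hr1 : pF 1 r0.
  by right; rewrite /r0 nuM ?invr_eq0 // nuV // nu0; lia.
have hr0 : pE 0 r by apply/pE_iotaE; apply: pF_mono hr1.
have sr : sigma r = r by rewrite sig_iota.
have hcb : pE n (c - r * b).
  have -> : c - r * b = Ui * ((0 * a + U * c) - (a * 0 + b * V)).
    transitivity ((Ui * U) * c - (Ui * V) * b); first by rewrite hUi hUiV; ring.
    ring.
  by apply: pEM0.
have hda : pE n (d - a).
  have -> : d - a = Ui * ((0 * b + U * d) - (a * U + b * 0)).
    transitivity ((Ui * U) * d - (Ui * U) * a); first by rewrite hUi; ring.
    ring.
  by apply: pEM0.
have := hkG; rewrite ek inG_mx2 => -[_ _ e3 e4].
have H1 : pE n (sigma a * a + r * (sigma b * b) - 1).
  have -> : sigma a * a + r * (sigma b * b) - 1 =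
      sigma (a - d) * a + sigma b * (r * b - c) + (sigma d * a + sigma b * c - 1).
    rewrite rmorphB; ring.
  rewrite e3 subrr addr0; apply: pED.
    apply: pEMr0 => //; apply: pE_sig; rewrite -opprB; exact: pEN.
  apply: pEM0; first exact: pE_sig.
  rewrite -opprB; exact: pEN.
have H2 : pE n (sigma a * b + sigma b * a).
  have -> : sigma a * b + sigma b * a =
      sigma (a - d) * b + sigma b * (a - d) + (sigma d * b + sigma b * d).
    rewrite rmorphB; ring.
  have hadn : pE n (a - d) by rewrite -opprB; exact: pEN.
  rewrite e4 addr0; apply: pED.
    by apply: pEMr0 => //; apply: pE_sig.
  by apply: pEM0 => //; apply: pE_sig.
have [A [B [hA hB hN hS [hAa hBb]]]] := core n r0 a b n1 hr1 ha hb H1 H2.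
pose c0 := mx2 A B (r * B) A.
have hc0G : inG c0.
  rewrite inG_mx2 rmorphM sr; split.
  - transitivity (r * (sigma A * B + sigma B * A)); first ring.
    by rewrite hS mulr0.
  - by rewrite -hN; ring.
  - by rewrite -hN; ring.
  - exact: hS.
have hc00 : mxin 0 c0.
  by apply: mxin_mx2 => //; apply: pEM0.
have hc0X : c0 *m X = X *m c0.
  rewrite /c0 /X !mx2_mul; congr mx2; rewrite -?hUr; ring.
exists c0, (ginv c0 *m k); split.
- by split => //; split.
- split; first by apply: inG_mul => //; apply: inG_ginv.
  have -> : ginv c0 *m k - 1%:M = ginv c0 *m (k - c0).
    by rewrite mulmxBr ginv_l.
  apply: mxin_mul0; first by apply: mxin_ginv.
  rewrite ek /c0 mx2_sub; apply: mxin_mx2.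
  + by rewrite -opprB; apply: pEN.
  + by rewrite -opprB; apply: pEN.
  + have -> : c - r * B = (c - r * b) + r * (b - B) by ring.
    by apply: pED => //; apply: pEM0 => //; rewrite -opprB; apply: pEN.
  + have -> : d - A = (d - a) - (A - a) by ring.
    exact: pEB.
- by rewrite mulmxA ginv_r // mul1mx.
Qed.

End S.

Theorem lemma5p4 (F : fieldType) (nu : F -> int) (eps : F)
  (E : fieldType) (iota : {rmorphism F -> E}) (se : E)
  (sigma : {rmorphism E -> E}) (R : realType)
  (HF : nonarch_local_field_odd nu)
  (HE : unramified_quadratic nu eps iota se sigma)
  (u v : F) (hu : u != 0 /\ nu u = 0) (hv : v != 0 /\ 0 < nu v)
  (s : R) (hs : 0 < s) (k : 'M[E]_2) (hk : inK nu iota se sigma k) :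
  let X := mx2 0 (iota u * se) (iota v * se) 0 in
  in_liekn nu iota se sigma (Num.ceil s) (invmx k *m X *m k - X) <->
  exists c g : 'M[E]_2,
    [/\ inT nu iota se sigma X c, inKn nu iota se sigma (Num.ceil s) g & k = c *m g].
Proof.
move=> X.
have n1 : 1 <= Num.ceil s.
  have := ceil_gt0 s; rewrite hs => h; lia.
case: hu => u0 nu0; case: hv => v0 nv.
split.
- move=> hY.
  exact: (onlyif_dir _ _ _ _ _ _ _ HF HE _ _ _ _ n1 u0 nu0 v0 nv hk hY).
- move=> [c [g [hc hg ek]]].
  apply: (if_dir _ _ _ _ _ _ _ HF HE _ _ _ _ _ _ n1 _ _ hk hc hg ek).
  + by right; rewrite nu0.
  + by right; lia.
Qed.
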